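(* Let $f_1,\ldots,f_k\in\mathbb{R}[X_1,\ldots,X_n]$ with $\deg f_i<d$ for all $i$, and suppose that the origin is not a solution of the system $f_1\ge 0,\ldots,f_k\ge 0$ and that its solution set in $\mathbb{R}^n$ is bounded. Let $D$ be the minimal even integer not less than $kd+1$ and $$g(\varepsilon)=\prod_{1\le i\le k}(f_i+\varepsilon)-\varepsilon^{k+1}\sum_{1\le j\le n}X_j^{D}.$$ Then for all sufficiently small positive values of $\varepsilon$: if the system $f_1\ge 0,\ldots,f_k\ge 0$ has a real solution, then the system of equations $\frac{\partial g(\varepsilon)}{\partial X_1}=\cdots=\frac{\partial g(\varepsilon)}{\partial X_n}=0$ has only finitely many roots in $\mathbb{C}^n$. *)

(* Defs.v *)
From HB Require Import structures.
From mathcomp Require Import all_boot all_order all_algebra.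
From mathcomp Require Import reals.
From mathcomp Require Import complex.
From mathcomp Require Import mpoly.

Set Implicit Arguments.
Unset Strict Implicit.
Unset Printing Implicit Defensive.

Import Order.TTheory GRing.Theory Num.Theory.
Local Open Scope ring_scope.

Definition minEvenGe (m : nat) : nat := if odd m then m.+1 else m.
Definition Dexp (k d : nat) : nat := minEvenGe (k * d).+1.

Definition gpoly (R : realType) (n k d : nat) (f : 'I_k -> {mpoly R[n]})
    (eps : R) : {mpoly R[n]} :=
  \prod_(i < k) (f i + eps%:MP)
  - (eps ^+ k.+1) *: \sum_(j < n) ('X_j) ^+ (Dexp k d).

Definition semialg_sol (R : realType) (n k : nat) (f : 'I_k -> {mpoly R[n]})
    (x : 'I_n -> R) : Prop :=
  forall i, 0 <= (f i).@[x].

Definition cpoly (R : realType) (n : nat) (p : {mpoly R[n]})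
  : {mpoly (complex R)[n]} := map_mpoly (fun r : R => Complex r 0) p.

Definition crit_root (R : realType) (n : nat) (p : {mpoly R[n]})
    (z : {ffun 'I_n -> complex R}) : Prop :=
  forall j : 'I_n, (cpoly (mderiv j p)).@[z] = 0.

Definition finitely_many (T : eqType) (P : T -> Prop) : Prop :=
  exists s : seq T, forall z, P z -> z \in s.

(* Main.v *)
Require Import Defs.
From HB Require Import structures.
From mathcomp Require Import all_boot all_order all_algebra.
From mathcomp Require Import reals.
From mathcomp Require Import complex.
From mathcomp Require Import mpoly.
From mathcomp Require Import zify.

Import Order.TTheory GRing.Theory Num.Theory.
Local Open Scope ring_scope.
Set Implicit Arguments.
Unset Strict Implicit.


Definition zm (F : pzRingType) (n : nat) (mu : 'X_{1..n}) (z : {ffun 'I_n -> F}) : F :=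
  \prod_(l < n) z l ^+ mu l.
Arguments zm {F n} mu z.

Definition bas (F : pzRingType) (n m : nat) (i : 'I_#|{ffun 'I_n -> 'I_m}|)
  (z : {ffun 'I_n -> F}) : F := \prod_(l < n) z l ^+ (enum_val i l).
Arguments bas {F n} m i z.

Definition Good (F : pzRingType) (n m : nat) (Z : {ffun 'I_n -> F} -> Prop)
  (G : {ffun 'I_n -> F} -> F) :=
  exists c : 'I_#|{ffun 'I_n -> 'I_m}| -> F,
    forall z, Z z -> G z = \sum_i c i * bas m i z.
Arguments Good {F n} m Z G.

Lemma good_ext (F : pzRingType) n m (Z : {ffun 'I_n -> F} -> Prop) (G1 G2 : {ffun 'I_n -> F} -> F) :
  (forall z, Z z -> G1 z = G2 z) -> Good m Z G2 -> Good m Z G1.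
Proof. by move=> h [c hc]; exists c => z Zz; rewrite h // hc. Qed.

Lemma goodZ (F : comPzRingType) n m (Z : {ffun 'I_n -> F} -> Prop) (G : {ffun 'I_n -> F} -> F) a :
  Good m Z G -> Good m Z (fun z => a * G z).
Proof.
move=> [c hc]; exists (fun i => a * c i) => z Zz; rewrite hc // big_distrr.
by apply: eq_bigr => i _ /=; rewrite mulrA.
Qed.

Lemma good_sum (F : comPzRingType) n m (Z : {ffun 'I_n -> F} -> Prop) (I : eqType) (r : seq I)
  (G : I -> {ffun 'I_n -> F} -> F) :
  (forall i, i \in r -> Good m Z (G i)) ->
  Good m Z (fun z => \sum_(i <- r) G i z).
Proof.
elim: r => [|x r IH] h.
  exists (fun _ => 0) => z _; rewrite big_nil big1 // => i _; by rewrite mul0r.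
have [c1 h1] := h x (mem_head _ _).
have [c2 h2] : Good m Z (fun z => \sum_(i <- r) G i z).
  by apply: IH => i ir; apply: h; rewrite in_cons ir orbT.
exists (fun i => c1 i + c2 i) => z Zz; rewrite big_cons h1 // h2 // -big_split.
by apply: eq_bigr => i _; rewrite mulrDl.
Qed.

Lemma good_small (F : pzRingType) n m (Z : {ffun 'I_n -> F} -> Prop) (mu : 'X_{1..n}) :
  (forall l, mu l < m)%N -> Good m Z (zm mu).
Proof.
move=> H.
pose t : {ffun 'I_n -> 'I_m} := [ffun l => Ordinal (H l)].
exists (fun i => (i == enum_rank t)%:R) => z _.
rewrite (bigD1 (enum_rank t)) //= eqxx mul1r big1 ?addr0.
  rewrite /bas enum_rankK /zm; apply: eq_bigr => l _; by rewrite ffunE.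
by move=> i /negbTE ->; rewrite mul0r.
Qed.

Lemma zmD (F : comPzRingType) n (a b : 'X_{1..n}) (z : {ffun 'I_n -> F}) :
  zm (a + b)%MM z = zm a z * zm b z.
Proof. by rewrite /zm -big_split; apply: eq_bigr => l _; rewrite mnmDE exprD. Qed.

Lemma zmU (F : comPzRingType) n (j : 'I_n) t (z : {ffun 'I_n -> F}) :
  zm (U_(j) *+ t)%MM z = z j ^+ t.
Proof.
rewrite /zm (bigD1 j) //= big1 ?mulr1.
  by rewrite mulmnE mnm1E eqxx mul1n.
by move=> l /negbTE hl; rewrite mulmnE mnm1E eq_sym hl mul0n expr0.
Qed.

Lemma good_all (F : comPzRingType) n m (Z : {ffun 'I_n -> F} -> Prop) (s : 'I_n -> seq 'X_{1..n})
  (a : 'I_n -> 'X_{1..n} -> F)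
  (Hs : forall j r, r \in s j -> (mdeg r < m)%N)
  (H : forall j z, Z z -> z j ^+ m = \sum_(r <- s j) a j r * zm r z) :
  forall mu, Good m Z (zm mu).
Proof.
suff: forall K mu, (mdeg mu < K)%N -> Good m Z (zm mu).
  by move=> h mu; apply: (h (mdeg mu).+1).
elim=> [//|K IH] mu Hmu.
have [Hsmall|] := boolP [forall l, (mu l < m)%N].
  by apply: good_small => l; exact: (forallP Hsmall l).
rewrite negb_forall => /existsP [j]; rewrite -leqNgt => Hj.
set nu := (mu - U_(j) *+ m)%MM.
have Hmu2 : mu = (nu + U_(j) *+ m)%MM.
  apply/mnmP => l; rewrite mnmDE mnmBE mulmnE mnm1E.
  case: eqP => [<-|_] /=; rewrite ?mul1n ?mul0n ?subn0 ?addn0 //.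
  by rewrite subnK.
have Hdeg : mdeg mu = (mdeg nu + m)%N by rewrite {1}Hmu2 mdegD mdegMn mdeg1 mul1n.
apply: (@good_ext _ _ _ _ _ (fun z => \sum_(r <- s j) a j r * zm (nu + r)%MM z)).
  move=> z Zz; rewrite {1}Hmu2 zmD zmU (H j z Zz) big_distrr.
  by apply: eq_bigr => r _; rewrite zmD mulrCA.
apply: good_sum => r Hr; apply: goodZ; apply: IH.
rewrite mdegD; have := Hs j r Hr; lia.
Qed.


Lemma coord_finite (F : closedFieldType) n m (Z : {ffun 'I_n -> F} -> Prop)
  (HG : forall j t, Good m Z (fun z => z j ^+ t)) :
  forall j, exists r : seq F, forall z, Z z -> z j \in r.
Proof.
move=> j.
set N := #|{ffun 'I_n -> 'I_m}|.
have /fin_all_exists [c Hc] : forall t : 'I_N.+1, exists c : 'I_N -> F,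
    forall z, Z z -> z j ^+ t = \sum_i c i * bas m i z.
  by move=> t; exact: HG.
pose A : 'M[F]_(N.+1, N) := \matrix_(t, i) c t i.
have Hk : kermx A != 0.
  rewrite kermx_eq0 /row_free; apply/negP => /eqP h.
  by have := rank_leq_col A; rewrite h ltnn.
have [i0 Hi0] : exists i0, row i0 (kermx A) != 0.
  case: (pickP (fun i : 'I_N.+1 => row i (kermx A) != 0)) => [i0 Hi0|H0]; first by exists i0.
  exfalso; move/negP: Hk; apply; apply/eqP/row_matrixP => i.
  by rewrite row0; move/negbFE/eqP: (H0 i).
set u := row i0 (kermx A).
have uA : u *m A = 0 by rewrite /u -row_mul mulmx_ker row0.
have [t0 Ht0] : exists t0, u 0 t0 != 0.
  case: (pickP (fun t : 'I_N.+1 => u 0 t != 0)) => [t0 Ht0|H0]; first by exists t0.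
  exfalso; move/negP: Hi0; apply; apply/eqP/rowP => t.
  by rewrite [RHS]mxE; move/negbFE/eqP: (H0 t).
pose q : {poly F} := \poly_(t < N.+1) u 0 (inord t).
have q0 : q != 0.
  apply/eqP => /(congr1 (fun p : {poly F} => p`_t0)).
  rewrite coef_poly ltn_ord inord_val coef0 => h.
  by move/eqP: Ht0.
have [r Hr] := closed_field_poly_normal q.
exists r => z Zz.
have Hroot : root q (z j).
  rewrite /root horner_poly.
  have -> : \sum_(t < N.+1) u 0 (inord t) * z j ^+ t =
      \sum_(t < N.+1) u 0 t * \sum_i c t i * bas m i z.
    by apply: eq_bigr => t _; rewrite inord_val Hc.
  under eq_bigr do rewrite big_distrr.
  rewrite exchange_big /= big1 //= => i _.
  have : (u *m A) 0 i = 0 by rewrite uA mxE.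
  rewrite mxE => h.
  under eq_bigr do rewrite mulrA.
  rewrite -big_distrl /=.
  suff -> : \sum_(t < N.+1) u 0 t * c t i = 0 by rewrite mul0r.
  by rewrite -[RHS]h; apply: eq_bigr => t _; rewrite [A _ _]mxE.
move: Hroot; rewrite Hr rootZ ?lead_coef_eq0 //.
by rewrite root_prod_XsubC.
Qed.

Lemma finite_of_coords (F : eqType) (x0 : F) n (Z : {ffun 'I_n -> F} -> Prop) :
  (forall j, exists r : seq F, forall z, Z z -> z j \in r) ->
  exists s : seq {ffun 'I_n -> F}, forall z, Z z -> z \in s.
Proof.
move=> /fin_all_exists [rr Hrr].
pose S := flatten [seq rr j | j <- enum 'I_n].
have HS : forall z, Z z -> forall l, z l \in S.
  move=> z Zz l; apply/flattenP; exists (rr l); last exact: Hrr.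
  by apply: map_f; rewrite mem_enum.
exists [seq [ffun l => nth x0 S (g l)] | g : {ffun 'I_n -> 'I_(size S)} <- enum {ffun 'I_n -> 'I_(size S)}].
move=> z Zz.
have HI : forall l, (index (z l) S < size S)%N by move=> l; rewrite index_mem HS.
apply/mapP; exists [ffun l => Ordinal (HI l)]; first by rewrite mem_enum.
by apply/ffunP => l; rewrite !ffunE /= nth_index ?HS.
Qed.


Lemma msize_prod_le (R : idomainType) n k (p : 'I_k -> {mpoly R[n]}) e :
  (forall i, msize (p i) <= e.+1)%N -> (msize (\prod_i p i) <= (k * e).+1)%N.
Proof.
elim: k p => [|k IH] p hp.
  by rewrite big_ord0 msize1.
rewrite big_ord_recr /=.
set a := \prod_(i < k) _.
have ha : (msize a <= (k * e).+1)%N by apply: IH => i; apply: hp.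
have hb := hp ord_max.
have [->|a0] := eqVneq a 0; first by rewrite mul0r msize0.
have [->|b0] := eqVneq (p ord_max) 0; first by rewrite mulr0 msize0.
rewrite msizeM //; lia.
Qed.

Lemma Dexp_ge k d : ((k * d).+1 <= Dexp k d)%N.
Proof. by rewrite /Dexp /minEvenGe; case: ifP => _ //; rewrite leqnSn. Qed.

Lemma Ueq n (l j : 'I_n) m (r : 'X_{1..n}) :
  (U_(l) *+ m.+1 == r + U_(j))%MM = (l == j) && (r == U_(j) *+ m)%MM.
Proof.
apply/eqP/andP.
  move=> /mnmP h.
  have hj := h j; rewrite mulmnE mnmDE !mnm1E eqxx addn1 in hj.
  have lj : l == j by case: eqP hj.
  split => //; move/eqP: lj => lj; subst l.
  apply/eqP/mnmP => i; have := h i; rewrite !mulmnE mnmDE !mnm1E.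
  by case: eqP => _ /=; rewrite ?mul1n ?mul0n ?addn0 ?addn1 // => -[].
case=> /eqP -> /eqP ->; apply/mnmP => i; rewrite mnmDE !mulmnE !mnm1E.
by case: eqP => _ /=; rewrite ?mul1n ?mul0n ?addn0 ?addn1.
Qed.

Lemma coef_deriv (R : realType) n k d (f : 'I_k -> {mpoly R[n]}) (eps : R)
  (hdeg : forall i, (msize (f i) <= d)%N) (j : 'I_n) (r : 'X_{1..n}) :
  ((Dexp k d).-1 <= mdeg r)%N ->
  (mderiv j (gpoly d f eps))@_r =
    - (eps ^+ k.+1 * ((r == U_(j) *+ (Dexp k d).-1)%MM%:R *+ (r j).+1)).
Proof.
move=> hr.
have hD := Dexp_ge k d.
set m := (Dexp k d).-1 in hr *.
have Dm : Dexp k d = m.+1 by rewrite /m prednK //; lia.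
rewrite /gpoly mderivB mderivZ mcoeffB mcoeffZ !mcoeff_mderiv.
rewrite (memN_msupp_eq0 (m := (r + U_(j))%MM)); last first.
  apply: msize_mdeg_ge; rewrite mdegD mdeg1.
  apply: (leq_trans (@msize_prod_le _ _ _ _ d.-1 _)).
    move=> i; apply: (leq_trans (msizeD_le _ _)); rewrite msizeC geq_max; apply/andP; split; [exact: leq_trans (hdeg i) (leqSpred _) | by case: (_ != _)].
  have : (k * d.-1 <= k * d)%N by apply: leq_mul => //; lia.
  lia.
rewrite mul0rn sub0r; congr (- (_ * _)); congr (_ *+ _).
rewrite raddf_sum /= Dm.
under eq_bigr do rewrite mcoeffXn Ueq.
rewrite (bigD1 j) //= eqxx /= big1 ?addr0 // => l /negbTE ->.
by [].
Qed.


Lemma cpoly_eval (R : realType) n (p : {mpoly R[n]}) (z : {ffun 'I_n -> R[i]}) :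
  (cpoly p).@[z] = \sum_(r <- msupp p) Complex (p@_r) 0 * zm r z.
Proof.
have -> : cpoly p = map_mpoly (real_complex R) p by [].
rewrite mevalE (perm_big _ (msupp_map_mpoly _ _)); last first.
  by move=> x y [].
by apply: eq_bigr => r _; rewrite mcoeff_map_mpoly.
Qed.

Theorem lemma5p3 (R : realType) (n k d : nat) (f : 'I_k -> {mpoly R[n]})
  (hdeg : forall i, (msize (f i) <= d)%N)
  (horig : ~ semialg_sol f (fun _ => 0))
  (hbdd : exists M : R, forall x : 'I_n -> R,
      semialg_sol f x -> forall j, `|x j| <= M) :
  exists eps0 : R, 0 < eps0 /\
    forall eps : R, 0 < eps -> eps < eps0 ->
      (exists x : 'I_n -> R, semialg_sol f x) ->
      finitely_many (crit_root (gpoly d f eps)).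
Proof.
exists 1; split => // eps heps _ _.
set g := gpoly d f eps.
set m := (Dexp k d).-1.
have hD := Dexp_ge k d.
pose r0 (j : 'I_n) := (U_(j) *+ m)%MM.
pose c0 (j : 'I_n) : R[i] := Complex ((mderiv j g)@_(r0 j)) 0.
have hr0 : forall j, (mderiv j g)@_(r0 j) = - (eps ^+ k.+1 *+ m.+1).
  move=> j; rewrite /g coef_deriv //; last by rewrite mdegMn mdeg1 mul1n.
  by rewrite eqxx mulmnE mnm1E eqxx mul1n mulr_natr.
have hr0nz : forall j, (mderiv j g)@_(r0 j) != 0.
  move=> j; rewrite hr0 oppr_eq0 -mulr_natr mulf_neq0 ?pnatr_eq0 //.
  by rewrite expf_neq0 // gt_eqF.
have c0nz : forall j, c0 j != 0.
  by move=> j; apply/eqP => -[] /eqP; apply/negP.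
pose s (j : 'I_n) := [seq r <- msupp (mderiv j g) | r != r0 j].
pose a (j : 'I_n) (r : 'X_{1..n}) : R[i] := - Complex ((mderiv j g)@_r) 0 / c0 j.
pose Z := crit_root g.
have Hs : forall j r, r \in s j -> (mdeg r < m)%N.
  move=> j r; rewrite mem_filter => /andP [hne hin].
  rewrite ltnNge; apply/negP => hle.
  move: hin; rewrite mcoeff_msupp /g coef_deriv // -/m.
  by rewrite (negbTE hne) mul0rn mulr0 oppr0 eqxx.
have H : forall j z, Z z -> z j ^+ m = \sum_(r <- s j) a j r * zm r z.
  move=> j z Zz.
  have h := Zz j.
  rewrite cpoly_eval (bigD1_seq (r0 j)) ?msupp_uniq //= in h; last first.
    by rewrite mcoeff_msupp.
  rewrite zmU -/(c0 j) in h.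
  set Y := \sum_(r <- _ | _) _ in h.
  have hY : Y = - (c0 j * z j ^+ m).
    by apply/eqP; rewrite -addr_eq0 addrC h.
  have -> : \sum_(r <- s j) a j r * zm r z = - Y / c0 j.
    rewrite big_filter /Y -sumrN big_distrl; apply: eq_bigr => r _.
    by rewrite /a /= !mulNr mulrAC.
  by rewrite hY opprK mulrC mulKf.
have HG : forall j t, Good m Z (fun z => z j ^+ t).
  move=> j t.
  have hg := @good_all _ _ _ Z s a Hs H (U_(j) *+ t)%MM.
  apply: (@good_ext _ _ _ _ _ (zm (U_(j) *+ t)%MM) _ hg).
  by move=> z _; rewrite zmU.
have := coord_finite HG.
move/(finite_of_coords 0) => [sq Hsq].
by exists sq.
Qed.
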